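(* Let $S:\mathcal{V}\times\mathcal{Y}\to\mathbb{R}$ be a surrogate loss such that $S(\cdot,y)$ is continuous for every $y\in\mathcal{Y}$, and suppose there is a continuous injective map $t:\mathcal{M}\to\mathcal{V}$ such that for every $q\in\operatorname{Prob}(\mathcal{Y})$, $t(\mu(q))$ is the unique minimizer of $v\mapsto s(v,q)$ over $\mathcal{V}$. Then there exists a strictly convex function $h:\mathcal{M}\to\mathbb{R}$, differentiable on $\mathcal{M}$ (with gradients taken within the affine hull of $\mathcal{M}$), such that $$\delta s(v,q)=D_h\big(\mu(q),t^{-1}(v)\big)\qquad\text{for all } v\in t(\mathcal{M}),\ q\in\operatorname{Prob}(\mathcal{Y}).$$
   Context: Let $\mathcal{Y}$ be a finite nonempty set, $\mathcal{H}$ a finite-dimensional real Euclidean space with inner product $\langle\cdot,\cdot\rangle$, and $\phi:\mathcal{Y}\to\mathcal{H}$ a map. $\operatorname{Prob}(\mathcal{Y})$ denotes the set of probability distributions on $\mathcal{Y}$; for $q\in\operatorname{Prob}(\mathcal{Y})$ let $\mu(q)=\sum_{y}q(y)\phi(y)$. The marginal polytope is $\mathcal{M}=\operatorname{hull}(\phi(\mathcal{Y}))=\{\mu(q):q\in\operatorname{Prob}(\mathcal{Y})\}$. A surrogate loss is a function $S:\mathcal{V}\times\mathcal{Y}\to\mathbb{R}$ where $\mathcal{V}$ is a finite-dimensional real vector space; $s(v,q)=\mathbb{E}_{Y\sim q}S(v,Y)$ and $\delta s(v,q)=s(v,q)-\inf_{v'\in\mathcal{V}}s(v',q)$. For a convex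 differentiable $h$ on a convex set, the Bregman divergence is $D_h(u',u)=h(u')-h(u)-\langle u'-u,\nabla h(u)\rangle$. *)

(* Defs.v *)
From Stdlib Require Import Reals Lra.
Open Scope R_scope.

(* Vectors of R^n are represented as functions nat -> R whose coordinates
   with index >= n are 0 (predicate [in_space n]). *)
Definition vec := nat -> R.

Fixpoint rsum (n : nat) (f : nat -> R) : R :=
  match n with O => 0 | S n' => rsum n' f + f n' end.

Definition in_space (n : nat) (x : vec) : Prop := forall i, (n <= i)%nat -> x i = 0.
Definition inner (n : nat) (x y : vec) : R := rsum n (fun i => x i * y i).
Definition vnorm (n : nat) (x : vec) : R := sqrt (inner n x x).
Definition vsub (x y : vec) : vec := fun i => x i - y i.
Definition vcomb (a : R) (x : vec) (b : R) (y : vec) : vec := fun i => a * x i + b * y i.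

(* Y = {0,...,m-1}; probability distributions on Y *)
Definition is_prob (m : nat) (q : vec) : Prop :=
  (forall y, (y < m)%nat -> 0 <= q y) /\ rsum m q = 1.

Definition mu (m : nat) (phi : nat -> vec) (q : vec) : vec :=
  fun i => rsum m (fun y => q y * phi y i).

(* marginal polytope M = { mu(q) : q in Prob(Y) } *)
Definition marg (m : nat) (phi : nat -> vec) (u : vec) : Prop :=
  exists q, is_prob m q /\ u = mu m phi q.

(* s(v,q) = E_{Y~q} S(v,Y) *)
Definition sexp (m : nat) (S : vec -> nat -> R) (v q : vec) : R :=
  rsum m (fun y => q y * S v y).

Definition is_glb (E : R -> Prop) (l : R) : Prop :=
  (forall r, E r -> l <= r) /\ (forall b, (forall r, E r -> b <= r) -> b <= l).

(* delta s(v,q) = r, where V = R^k, i.e. s(v,q) - r = inf_{v' in V} s(v',q) *)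
Definition delta_s_eq (m k : nat) (S : vec -> nat -> R) (v q : vec) (r : R) : Prop :=
  is_glb (fun z => exists v', in_space k v' /\ z = sexp m S v' q) (sexp m S v q - r).

Definition continuous_on_R (n : nat) (A : vec -> Prop) (f : vec -> R) : Prop :=
  forall x, A x -> forall eps, eps > 0 -> exists delta, delta > 0 /\
    forall x', A x' -> vnorm n (vsub x' x) < delta -> Rabs (f x' - f x) < eps.

Definition continuous_on (n p : nat) (A : vec -> Prop) (f : vec -> vec) : Prop :=
  forall x, A x -> forall eps, eps > 0 -> exists delta, delta > 0 /\
    forall x', A x' -> vnorm n (vsub x' x) < delta -> vnorm p (vsub (f x') (f x)) < eps.

Definition strictly_convex_on (n : nat) (A : vec -> Prop) (h : vec -> R) : Prop :=
  forall x y, A x -> A y -> x <> y -> forall l, 0 < l < 1 ->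
    h (vcomb l x (1 - l) y) < l * h x + (1 - l) * h y.

Definition differentiable_on (n : nat) (A : vec -> Prop) (h : vec -> R) (grad : vec -> vec) : Prop :=
  forall u, A u -> forall eps, eps > 0 -> exists delta, delta > 0 /\
    forall u', A u' -> vnorm n (vsub u' u) < delta ->
      Rabs (h u' - h u - inner n (vsub u' u) (grad u)) <= eps * vnorm n (vsub u' u).

(* g lies in the direction space of aff(M) = span { phi y - phi 0 } *)
Definition aff_dir (m : nat) (phi : nat -> vec) (g : vec) : Prop :=
  exists c : nat -> R, g = fun i => rsum m (fun y => c y * (phi y i - phi 0%nat i)).

Definition bregman (n : nat) (h : vec -> R) (grad : vec -> vec) (u' u : vec) : R :=
  h u' - h u - inner n (vsub u' u) (grad u).

(* Main.v *)
Require Import Defs.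
From Stdlib Require Import Reals Lra.
Open Scope R_scope.
Module LA.
From HB Require Import structures.
From mathcomp Require Import all_boot all_algebra.
From mathcomp Require Import Rstruct.
Import GRing.Theory.
Local Open Scope ring_scope.
Lemma solve_sym (F : fieldType) m (K : 'M[F]_m) (b : 'rV[F]_m) :
  K^T = K -> (forall w : 'rV_m, w *m K = 0 -> w *m b^T = 0) ->
  b *m pinvmx K *m K = b.
Proof.
move=> sK hb; apply: mulmxKpV.
set N := kermx K.
have NK : N *m K = 0 by exact: mulmx_ker.
have Nb : N *m b^T = 0.
  apply/row_matrixP => i; rewrite row_mul row0; apply: hb.
  by rewrite -row_mul NK row0.
have bsub : (b <= kermx N^T)%MS.
  by apply/sub_kermxP; rewrite -[b]trmxK -trmx_mul Nb trmx0.
have Ksub : (K <= kermx N^T)%MS.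
  by apply/sub_kermxP; rewrite -{1}sK -trmx_mul NK trmx0.
have rk : (\rank (kermx N^T) <= \rank K)%N.
  by rewrite mxrank_ker mxrank_tr mxrank_ker subKn ?rank_leq_row.
have [_ e] := mxrank_leqif_sup Ksub.
apply: submx_trans bsub _; by rewrite -e eqn_leq rk (mxrankS Ksub).
Qed.

Lemma rsum_big n (f : nat -> R) : rsum n f = \sum_(i < n) f i.
Proof. elim: n => [|n IH] /=; first by rewrite big_ord0. by rewrite big_ord_recr /= IH. Qed.

Definition ext m (A : 'M[R]_m) (x y : nat) : R :=
  match (insub x : option 'I_m), (insub y : option 'I_m) with
  | Some i, Some j => A i j | _, _ => 0 end.

Arguments ext {m}.
Lemma extE m (A : 'M[R]_m) (i j : 'I_m) : ext A i j = A i j.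
Proof. by rewrite /ext !valK. Qed.

Lemma solve_nat m (Kf : nat -> nat -> R) :
 (forall y z, Kf y z = Kf z y) ->
 exists P : nat -> nat -> R, forall b : nat -> R,
   (forall w : nat -> R, (forall z, (z < m)%N -> rsum m (fun y => w y * Kf y z) = 0) ->
       rsum m (fun y => w y * b y) = 0) ->
   forall z, (z < m)%N -> rsum m (fun y => rsum m (fun x => b x * P x y) * Kf y z) = b z.
Proof.
move=> sym.
pose K := \matrix_(i < m, j < m) Kf i j.
exists (ext (pinvmx K)) => b hb z zm.
pose br := \row_(j < m) b j.
have sK : K^T = K by apply/matrixP => i j; rewrite !mxE sym.
have := @solve_sym _ _ K br sK.
have H : (forall w : 'rV_m, w *m K = 0 -> w *m br^T = 0).
  move=> w wK.
  pose wn := fun y => match (insub y : option 'I_m) with Some i => w 0 i | None => 0 end.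
  have wnE : forall i : 'I_m, wn i = w 0 i by move=> i; rewrite /wn valK.
  have := hb wn.
  rewrite rsum_big.
  move=> h; apply/matrixP => i j; rewrite !mxE.
  rewrite [i]ord1 [j]ord1.
  under eq_bigr => k _ do rewrite !mxE.
  rewrite -[RHS]h.
    by apply eq_bigr => k _; rewrite wnE.
  move=> z' z'm; rewrite rsum_big.
  have := congr1 (fun M : 'M[R]_(1,m) => M 0 (Ordinal z'm)) wK; rewrite !mxE => e.
  rewrite -[RHS]e.
  by apply: eq_bigr => k _; rewrite wnE mxE.
move=> /(_ H) /(congr1 (fun M : 'M[R]_(1,m) => M 0 (Ordinal zm))).
rewrite !mxE => e; rewrite -[RHS]e. 
rewrite rsum_big; apply: eq_bigr => y _.
rewrite rsum_big mxE; congr (_ * _).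
  by apply eq_bigr => x _; rewrite extE [br _ _]mxE.
by rewrite mxE.
Qed.
End LA.

Lemma solve_nat' (m : nat) (Kf : nat -> nat -> R) :
 (forall y z, Kf y z = Kf z y) ->
 exists P : nat -> nat -> R, forall b : nat -> R,
   (forall w : nat -> R, (forall z, (z < m)%nat -> rsum m (fun y => w y * Kf y z) = 0) ->
       rsum m (fun y => w y * b y) = 0) ->
   forall z, (z < m)%nat -> rsum m (fun y => rsum m (fun x => b x * P x y) * Kf y z) = b z.
Proof.
intros sym. destruct (LA.solve_nat m Kf sym) as [P HP]. exists P.
intros b hb z zm. apply HP.
- intros w hw. apply hb. intros z' z'm. apply hw. exact (ssrbool.introT (@ssrnat.ltP _ _) z'm).
- exact (ssrbool.introT (@ssrnat.ltP _ _) zm).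
Qed.


From Stdlib Require Import Reals Lra Lia FunctionalExtensionality.
Open Scope R_scope.

Lemma rsum_ext n f g : (forall i, (i < n)%nat -> f i = g i) -> rsum n f = rsum n g.
Proof. induction n; simpl; intros H; auto. rewrite IHn by (intros; apply H; lia). rewrite H by lia; auto. Qed.

Lemma rsum_plus n f g : rsum n (fun i => f i + g i) = rsum n f + rsum n g.
Proof. induction n; simpl; [lra|rewrite IHn; lra]. Qed.

Lemma rsum_minus n f g : rsum n (fun i => f i - g i) = rsum n f - rsum n g.
Proof. induction n; simpl; [lra|rewrite IHn; lra]. Qed.

Lemma rsum_scal n c f : rsum n (fun i => c * f i) = c * rsum n f.
Proof. induction n; simpl; [lra|rewrite IHn; lra]. Qed.

Lemma rsum_scal_r n c f : rsum n (fun i => f i * c) = rsum n f * c.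
Proof. induction n; simpl; [lra|rewrite IHn; lra]. Qed.

Lemma rsum_const n c : rsum n (fun _ => c) = INR n * c.
Proof. induction n; simpl; [lra|rewrite IHn]. destruct n; simpl; lra. Qed.

Lemma rsum_zero n f : (forall i, (i < n)%nat -> f i = 0) -> rsum n f = 0.
Proof. intros H. rewrite (rsum_ext n f (fun _ => 0)) by auto. rewrite rsum_const; lra. Qed.

Lemma rsum_swap n m (f : nat -> nat -> R) :
  rsum n (fun i => rsum m (fun j => f i j)) = rsum m (fun j => rsum n (fun i => f i j)).
Proof.
induction n; simpl.
- rewrite rsum_zero; auto.
- rewrite IHn. rewrite <- rsum_plus. reflexivity.
Qed.

Lemma rsum_le n f g : (forall i, (i < n)%nat -> f i <= g i) -> rsum n f <= rsum n g.
Proof. induction n; simpl; intros H; [lra|]. assert (H1 := H n (Nat.lt_succ_diag_r n)). assert (rsum n f <= rsum n g) by (apply IHn; intros; apply H; lia). lra. Qed.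

Lemma rsum_nonneg n f : (forall i, (i < n)%nat -> 0 <= f i) -> 0 <= rsum n f.
Proof. intros H. replace 0 with (rsum n (fun _ => 0)). apply rsum_le; auto. rewrite rsum_const; lra. Qed.

Lemma rsum_abs n f : Rabs (rsum n f) <= rsum n (fun i => Rabs (f i)).
Proof. induction n; simpl. rewrite Rabs_R0; lra. eapply Rle_trans. apply Rabs_triang. lra. Qed.

Lemma rsum_term n f i : (forall j, (j < n)%nat -> 0 <= f j) -> (i < n)%nat -> f i <= rsum n f.
Proof.
induction n; intros H Hi; [lia|]. simpl.
destruct (Nat.eq_dec i n).
- subst. assert (0 <= rsum n f) by (apply rsum_nonneg; intros; apply H; lia). lra.
- assert (f i <= rsum n f) by (apply IHn; [intros; apply H; lia | lia]). assert (0 <= f n) by (apply H; lia). lra.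
Qed.

Lemma rsum_delta0 n c (X : nat -> R) : (0 < n)%nat ->
  rsum n (fun y => (if Nat.eqb y 0 then c else 0) * X y) = c * X 0%nat.
Proof.
induction n; intros H; [lia|]. simpl. destruct n.
- simpl. lra.
- rewrite IHn by lia. replace (Nat.eqb (S n) 0) with false by reflexivity. lra.
Qed.

Lemma sumsq_zero n f : rsum n (fun i => f i * f i) = 0 -> forall i, (i < n)%nat -> f i = 0.
Proof.
intros H i Hi.
assert (f i * f i <= rsum n (fun i => f i * f i)) by (apply (rsum_term n (fun i => f i * f i)); auto; intros; nra).
assert (0 <= f i * f i) by nra. nra.
Qed.

Lemma inner_sym n x y : inner n x y = inner n y x.
Proof. unfold inner. apply rsum_ext; intros; ring. Qed.

Lemma inner_nonneg n x : 0 <= inner n x x.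
Proof. apply rsum_nonneg; intros; nra. Qed.

Lemma inner_lin_l n a x b y z : inner n (fun i => a * x i + b * y i) z = a * inner n x z + b * inner n y z.
Proof. unfold inner. rewrite <- !rsum_scal, <- rsum_plus. apply rsum_ext; intros; ring. Qed.

Lemma inner_sub_l n x y z : inner n (vsub x y) z = inner n x z - inner n y z.
Proof. unfold inner, vsub. rewrite <- rsum_minus. apply rsum_ext; intros; ring. Qed.

Lemma inner_sub_r n x y z : inner n z (vsub x y) = inner n z x - inner n z y.
Proof. unfold inner, vsub. rewrite <- rsum_minus. apply rsum_ext; intros; ring. Qed.

Lemma inner_opp_r n x y : inner n x (fun i => - y i) = - inner n x y.
Proof. unfold inner. replace (- rsum n (fun i => x i * y i)) with ((-1) * rsum n (fun i => x i * y i)) by ring.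
rewrite <- rsum_scal. apply rsum_ext; intros; ring. Qed.

Lemma vnorm_scal n c x : vnorm n (fun i => c * x i) = Rabs c * vnorm n x.
Proof.
unfold vnorm, inner.
replace (rsum n (fun i => c * x i * (c * x i))) with ((c*c) * rsum n (fun i => x i * x i)).
- rewrite sqrt_mult_alt by nra. rewrite <- sqrt_Rsqr_abs. reflexivity.
- rewrite <- rsum_scal. apply rsum_ext; intros; ring.
Qed.

Lemma vnorm_nonneg n x : 0 <= vnorm n x.
Proof. apply sqrt_pos. Qed.

Lemma coord_le_vnorm n x i : (i < n)%nat -> Rabs (x i) <= vnorm n x.
Proof.
intros Hi. unfold vnorm. rewrite <- sqrt_Rsqr_abs. apply sqrt_le_1_alt.
unfold Rsqr. apply rsum_term with (f := fun i => x i * x i); auto. intros; nra.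
Qed.

Lemma inner_bound n a b : Rabs (inner n a b) <= vnorm n a * rsum n (fun i => Rabs (b i)).
Proof.
unfold inner. eapply Rle_trans. apply rsum_abs.
rewrite <- rsum_scal. apply rsum_le. intros i Hi. rewrite Rabs_mult.
apply Rmult_le_compat_r. apply Rabs_pos. apply coord_le_vnorm; auto.
Qed.

Lemma vnorm_ext n x y : (forall i, (i < n)%nat -> x i = y i) -> vnorm n x = vnorm n y.
Proof. intros H. unfold vnorm, inner. f_equal. apply rsum_ext. intros. rewrite H; auto. Qed.

Lemma inner_ext n x y x' y' : (forall i, (i < n)%nat -> x i = x' i) -> (forall i, (i < n)%nat -> y i = y' i) -> inner n x y = inner n x' y'.
Proof. intros H1 H2. unfold inner. apply rsum_ext. intros. rewrite H1, H2; auto. Qed.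

Lemma mu_lin m phi a q b q' : mu m phi (fun y => a * q y + b * q' y) = vcomb a (mu m phi q) b (mu m phi q').
Proof. apply functional_extensionality; intro i. unfold mu, vcomb. rewrite <- !rsum_scal, <- rsum_plus. apply rsum_ext; intros; ring. Qed.

Lemma sexp_lin m S v a q b q' : sexp m S v (fun y => a * q y + b * q' y) = a * sexp m S v q + b * sexp m S v q'.
Proof. unfold sexp. rewrite <- !rsum_scal, <- rsum_plus. apply rsum_ext; intros; ring. Qed.

Lemma inner_mu m d phi q g : inner d (mu m phi q) g = rsum m (fun y => q y * inner d (phi y) g).
Proof. unfold inner, mu.
transitivity (rsum d (fun i => rsum m (fun y => q y * (phi y i * g i)))).
- apply rsum_ext; intros. rewrite <- rsum_scal_r. apply rsum_ext; intros; ring.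
- rewrite rsum_swap. apply rsum_ext; intros. rewrite rsum_scal. reflexivity.
Qed.

Lemma prob_le1 m q y : is_prob m q -> (y < m)%nat -> q y <= 1.
Proof. intros [H1 H2] Hy. rewrite <- H2. apply rsum_term; auto. Qed.

From Stdlib Require Import Classical.

Lemma const01 (g : R -> R) :
 (forall l, 0 <= l <= 1 -> forall dl, dl > 0 -> exists rho, rho > 0 /\
    forall l', 0 <= l' <= 1 -> Rabs (l' - l) < rho -> Rabs (g l' - g l) <= dl * Rabs (l' - l)) ->
 g 1 = g 0.
Proof.
intros Hg.
destruct (Req_dec (g 1) (g 0)) as [e|ne]; auto. exfalso.
set (dl := Rabs (g 1 - g 0) / 2).
assert (Hdl : dl > 0) by (unfold dl; assert (Rabs (g 1 - g 0) > 0) by (apply Rabs_pos_lt; lra); lra).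
set (E := fun x => 0 <= x <= 1 /\ forall z, 0 <= z <= x -> Rabs (g z - g 0) <= dl * z).
assert (E0 : E 0).
{ split; [lra|]. intros z Hz. replace z with 0 by lra. unfold Rminus. rewrite Rplus_opp_r, Rabs_R0. lra. }
assert (Eb : bound E) by (exists 1; intros x [Hx _]; lra).
destruct (completeness E Eb (ex_intro _ 0 E0)) as [s [Hs1 Hs2]].
assert (s0 : 0 <= s) by (apply Hs1; auto).
assert (s1 : s <= 1) by (apply Hs2; intros x [Hx _]; lra).
assert (CA : forall z, 0 <= z < s -> Rabs (g z - g 0) <= dl * z).
{ intros z Hz. destruct (classic (exists x, E x /\ z < x)) as [[x [[_ Ex] zx]]|nx].
  - apply Ex; lra.
  - exfalso. assert (s <= z). { apply Hs2. intros x Ex. destruct (Rle_dec x z); auto. exfalso; apply nx; exists x; split; auto; lra. } lra. }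
destruct (Hg s (conj s0 s1) dl Hdl) as [rho [Hrho Hr]].
assert (CB : Rabs (g s - g 0) <= dl * s).
{ destruct (Req_dec s 0) as [e0|ne0].
  - rewrite e0. unfold Rminus. rewrite Rplus_opp_r, Rabs_R0. lra.
  - set (z := Rmax 0 (s - rho/2)).
    assert (z0 : 0 <= z) by apply Rmax_l.
    assert (zs : z < s) by (unfold z; apply Rmax_lub_lt; lra).
    assert (zs2 : s - rho/2 <= z) by apply Rmax_r.
    assert (h1 := CA z (conj z0 zs)).
    assert (zl1 : z <= 1) by lra. assert (zr : Rabs (z - s) < rho) by (rewrite Rabs_left by lra; lra).
    assert (h2 := Hr z (conj z0 zl1) zr).
    rewrite (Rabs_left (z - s)) in h2 by lra.
    replace (g s - g 0) with ((g s - g z) + (g z - g 0)) by ring.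
    eapply Rle_trans. apply Rabs_triang. rewrite Rabs_minus_sym. lra. }
assert (Es : E s).
{ split; [lra|]. intros z [z0 zs]. destruct (Req_dec z s) as [->|nzs]; auto. apply CA; lra. }
assert (s_eq : s = 1).
{ destruct (Req_dec s 1) as [e1|ne1]; auto. exfalso.
  set (z' := Rmin 1 (s + rho/2)).
  assert (z's : s < z') by (unfold z'; apply Rmin_glb_lt; lra).
  assert (z'1 : z' <= 1) by apply Rmin_l.
  assert (z'2 : z' <= s + rho/2) by apply Rmin_r.
  assert (Ez' : E z').
  { split; [lra|]. intros z [z0 zz].
    destruct (Rle_dec z s). { apply (proj2 Es); lra. }
    assert (zl1 : z <= 1) by lra. assert (zr : Rabs (z - s) < rho) by (rewrite Rabs_right by lra; lra).
    assert (h2 := Hr z (conj z0 zl1) zr).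
    rewrite (Rabs_right (z - s)) in h2 by lra.
    replace (g z - g 0) with ((g z - g s) + (g s - g 0)) by ring.
    eapply Rle_trans. apply Rabs_triang. lra. }
  assert (z' <= s) by (apply Hs1; auto). lra. }
rewrite s_eq in Es. assert (h := proj2 Es 1 ltac:(lra)).
unfold dl in h. assert (Rabs (g 1 - g 0) > 0) by (apply Rabs_pos_lt; lra). lra.
Qed.

Lemma fin_delta (m : nat) (P : nat -> R -> Prop) :
  (forall y d d', 0 < d' <= d -> P y d -> P y d') ->
  (forall y, (y < m)%nat -> exists d, d > 0 /\ P y d) ->
  exists d, d > 0 /\ forall y, (y < m)%nat -> P y d.
Proof.
intros mono. induction m; intros H.
- exists 1. split; [lra|]. intros; lia.
- destruct IHm as [d1 [Hd1 H1]]. { intros; apply H; lia. }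
  destruct (H m ltac:(lia)) as [d2 [Hd2 H2]].
  exists (Rmin d1 d2). split. { apply Rmin_glb_lt; lra. }
  intros y Hy. destruct (Nat.eq_dec y m) as [->|ne].
  + apply (mono m d2); auto. split. apply Rmin_glb_lt; lra. apply Rmin_r.
  + apply (mono y d1). split. apply Rmin_glb_lt; lra. apply Rmin_l. apply H1; lia.
Qed.

Lemma St_cont m d k (phi : nat -> vec) (S : vec -> nat -> R) (t : vec -> vec) :
  (forall y, (y < m)%nat -> continuous_on_R k (in_space k) (fun v => S v y)) ->
  (forall u, marg m phi u -> in_space k (t u)) ->
  continuous_on d k (marg m phi) t ->
  forall x, marg m phi x -> forall e, e > 0 -> exists delta, delta > 0 /\
    forall x', marg m phi x' -> vnorm d (vsub x' x) < delta ->
      forall y, (y < m)%nat -> Rabs (S (t x') y - S (t x) y) < e.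
Proof.
intros HS Hsp Htc x Hx e He.
assert (A := fin_delta m (fun y dl => forall v, in_space k v -> vnorm k (vsub v (t x)) < dl -> Rabs (S v y - S (t x) y) < e)).
destruct A as [d1 [Hd1 H1]].
- intros y dd dd' Hdd Hp v Hv Hn. apply Hp; auto. lra.
- intros y Hy. destruct (HS y Hy (t x) (Hsp x Hx) e He) as [dl [Hdl Hdl2]]. exists dl. split; auto.
- destruct (Htc x Hx d1 Hd1) as [dl [Hdl Hdl2]]. exists dl. split; auto.
Qed.

Lemma opt_le m (phi : nat -> vec) k S (t : vec -> vec) :
  (forall q, is_prob m q -> forall v, in_space k v -> v <> t (mu m phi q) ->
     sexp m S (t (mu m phi q)) q < sexp m S v q) ->
  forall q, is_prob m q -> forall v, in_space k v -> sexp m S (t (mu m phi q)) q <= sexp m S v q.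
Proof.
intros Hopt q Hq v Hv. destruct (classic (v = t (mu m phi q))) as [->|ne]. lra.
left; apply Hopt; auto.
Qed.

Lemma sexp_diff_bound m S v v' w e :
  (forall y, (y < m)%nat -> Rabs (S v y - S v' y) <= e) ->
  Rabs (sexp m S v w - sexp m S v' w) <= rsum m (fun y => Rabs (w y)) * e.
Proof.
intros H. unfold sexp. rewrite <- rsum_minus. eapply Rle_trans. apply rsum_abs.
rewrite <- rsum_scal_r. apply rsum_le. intros y Hy.
replace (w y * S v y - w y * S v' y) with (w y * (S v y - S v' y)) by ring.
rewrite Rabs_mult. apply Rmult_le_compat_l. apply Rabs_pos. auto.
Qed.

Lemma perturb m (phi : nat -> vec) P w s : is_prob m P ->
  (forall y, (y < m)%nat -> Rabs s * Rabs (w y) <= P y) -> rsum m w = 0 ->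
  (forall i, rsum m (fun y => w y * phi y i) = 0) ->
  is_prob m (fun y => 1 * P y + s * w y) /\ mu m phi (fun y => 1 * P y + s * w y) = mu m phi P.
Proof.
intros [HP1 HP2] Hm Hw Hwphi. split. split.
- intros y Hy. assert (h := Hm y Hy). rewrite <- Rabs_mult in h.
  assert (h2 := Rle_abs (- (s * w y))). rewrite Rabs_Ropp in h2. lra.
- rewrite rsum_plus, rsum_scal, rsum_scal, HP2, Hw. ring.
- rewrite mu_lin. apply functional_extensionality; intro i. unfold vcomb.
  replace (mu m phi w i) with 0 by (symmetry; apply Hwphi). ring.
Qed.

Lemma key_ineq m (phi : nat -> vec) k S (t : vec -> vec) :
  (forall u, marg m phi u -> in_space k (t u)) ->
  (forall q, is_prob m q -> forall v, in_space k v -> v <> t (mu m phi q) ->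
     sexp m S (t (mu m phi q)) q < sexp m S v q) ->
  forall P P' w eps, eps > 0 -> is_prob m P -> is_prob m P' ->
  (forall y, (y < m)%nat -> eps * Rabs (w y) <= P y) ->
  (forall y, (y < m)%nat -> eps * Rabs (w y) <= P' y) ->
  rsum m w = 0 -> (forall i, rsum m (fun y => w y * phi y i) = 0) ->
  2 * eps * Rabs (sexp m S (t (mu m phi P)) w - sexp m S (t (mu m phi P')) w) <=
    (sexp m S (t (mu m phi P')) P - sexp m S (t (mu m phi P)) P) +
    (sexp m S (t (mu m phi P)) P' - sexp m S (t (mu m phi P')) P').
Proof.
intros Hsp Hopt P P' w eps He HP HP' HmP HmP' Hw Hwphi.
set (a := t (mu m phi P)). set (a' := t (mu m phi P')).
assert (Ha : in_space k a) by (apply Hsp; exists P; split; auto).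
assert (Ha' : in_space k a') by (apply Hsp; exists P'; split; auto).
assert (G : forall Q s, is_prob m Q -> (forall y, (y < m)%nat -> eps * Rabs (w y) <= Q y) -> (s = eps \/ s = - eps) ->
   forall v, in_space k v ->
   sexp m S (t (mu m phi Q)) Q + s * sexp m S (t (mu m phi Q)) w <= sexp m S v Q + s * sexp m S v w).
{ intros Q s HQ HmQ Hs v Hv.
  assert (Habs : Rabs s = eps) by (destruct Hs as [->| ->]; [apply Rabs_right|rewrite Rabs_Ropp; apply Rabs_right]; lra).
  destruct (perturb m phi Q w s HQ ltac:(rewrite Habs; auto) Hw Hwphi) as [Hp Hmu].
  assert (h := opt_le m phi k S t Hopt _ Hp v Hv). rewrite Hmu in h.
  rewrite !sexp_lin in h. lra. }
assert (h1 := G P eps HP HmP (or_introl eq_refl) a' Ha').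
assert (h2 := G P (-eps) HP HmP (or_intror eq_refl) a' Ha').
assert (h3 := G P' eps HP' HmP' (or_introl eq_refl) a Ha).
assert (h4 := G P' (-eps) HP' HmP' (or_intror eq_refl) a Ha).
fold a a' in h1, h2, h3, h4.
unfold Rabs. destruct (Rcase_abs _); nra.
Qed.

Definition pp (m : nat) (q q' : vec) (eta l : R) : vec :=
  fun y => (1 - eta) * ((1 - l) * q y + l * q' y) + eta * / INR m.

Lemma pp_prob m q q' eta l : (0 < m)%nat -> is_prob m q -> is_prob m q' -> 0 < eta <= 1 -> 0 <= l <= 1 ->
  is_prob m (pp m q q' eta l) /\ forall y, (y < m)%nat -> eta / INR m <= pp m q q' eta l y.
Proof.
intros Hm [Hq1 Hq2] [Hq1' Hq2'] He Hl.
assert (Hmp : INR m > 0) by (apply lt_0_INR; lia).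
assert (Hmarg : forall y, (y < m)%nat -> eta / INR m <= pp m q q' eta l y).
{ intros y Hy. unfold pp. assert (h1 := Hq1 y Hy). assert (h2 := Hq1' y Hy).
  assert (0 <= (1 - eta) * ((1 - l) * q y + l * q' y)) by (apply Rmult_le_pos; nra). unfold Rdiv. lra. }
split; [split|]; auto.
- intros y Hy. assert (h := Hmarg y Hy). assert (0 <= eta / INR m) by (unfold Rdiv; apply Rmult_le_pos; [lra|left; apply Rinv_0_lt_compat; lra]). lra.
- unfold pp. rewrite rsum_plus, rsum_scal, rsum_plus, rsum_scal, rsum_scal, rsum_const, Hq2, Hq2'.
  field. lra.
Qed.

Lemma mu_pp m phi q q' eta l i :
  mu m phi (pp m q q' eta l) i =
  (1 - eta) * ((1 - l) * mu m phi q i + l * mu m phi q' i) + eta * mu m phi (fun _ => / INR m) i.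
Proof.
unfold mu, pp. rewrite <- !rsum_scal, <- rsum_plus, <- rsum_scal, <- rsum_plus.
apply rsum_ext; intros; ring.
Qed.

Lemma sexp_cross m S a a' P P' :
  (sexp m S a' P - sexp m S a P) + (sexp m S a P' - sexp m S a' P') =
  rsum m (fun y => (P y - P' y) * (S a' y - S a y)).
Proof. unfold sexp. rewrite <- !rsum_minus, <- rsum_plus. apply rsum_ext; intros; ring. Qed.

Lemma cross_bound m (P P' Q Q' X : vec) c e : 0 <= c -> 0 <= e -> is_prob m Q -> is_prob m Q' ->
  (forall y, (y < m)%nat -> Rabs (P y - P' y) <= c * (Q y + Q' y)) ->
  (forall y, (y < m)%nat -> Rabs (X y) <= e) ->
  rsum m (fun y => (P y - P' y) * X y) <= c * e * 2.
Proof.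
intros Hc He [HQ1 HQ2] [HQ1' HQ2'] H1 H2.
eapply Rle_trans. apply Rle_abs. eapply Rle_trans. apply rsum_abs.
apply Rle_trans with (rsum m (fun y => c * e * (Q y + Q' y))).
- apply rsum_le. intros y Hy. rewrite Rabs_mult.
  assert (h1 := H1 y Hy). assert (h2 := H2 y Hy). assert (0 <= Rabs (X y)) by apply Rabs_pos.
  assert (0 <= Rabs (P y - P' y)) by apply Rabs_pos.
  apply Rle_trans with (c * (Q y + Q' y) * e). apply Rmult_le_compat; auto. nra.
- rewrite rsum_scal, rsum_plus, HQ2, HQ2'. lra.
Qed.

Lemma eq_of_close x y : (forall e, e > 0 -> Rabs (x - y) < e) -> x = y.
Proof.
intros H. destruct (Req_dec x y); auto. exfalso.
assert (h := H (Rabs (x - y)) ltac:(apply Rabs_pos_lt; lra)). lra.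
Qed.

Lemma vsub_mu_pp m phi q q' eta l l' :
  vsub (mu m phi (pp m q q' eta l')) (mu m phi (pp m q q' eta l)) =
  (fun i => ((1 - eta) * (l' - l)) * vsub (mu m phi q') (mu m phi q) i).
Proof. apply functional_extensionality; intro i. unfold vsub. rewrite !mu_pp. ring. Qed.

Lemma stepA m d k (phi : nat -> vec) (S : vec -> nat -> R) (t : vec -> vec) :
  (0 < m)%nat ->
  (forall y, (y < m)%nat -> continuous_on_R k (in_space k) (fun v => S v y)) ->
  (forall u, marg m phi u -> in_space k (t u)) ->
  continuous_on d k (marg m phi) t ->
  (forall q, is_prob m q -> forall v, in_space k v -> v <> t (mu m phi q) ->
     sexp m S (t (mu m phi q)) q < sexp m S v q) ->
  forall w, rsum m w = 0 -> (forall i, rsum m (fun y => w y * phi y i) = 0) ->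
  forall u u', marg m phi u -> marg m phi u' -> sexp m S (t u) w = sexp m S (t u') w.
Proof.
intros Hm HS Hsp Htc Hopt w Hw Hwphi u u' [q [Hq ->]] [q' [Hq' ->]].
assert (Hmp : INR m > 0) by (apply lt_0_INR; lia).
set (W := rsum m (fun y => Rabs (w y)) + 1).
assert (HW0 : 0 <= rsum m (fun y => Rabs (w y))) by (apply rsum_nonneg; intros; apply Rabs_pos).
assert (HW : W > 0) by (unfold W; lra).
assert (HwW : forall y, (y < m)%nat -> Rabs (w y) <= W).
{ intros y Hy. unfold W. assert (Rabs (w y) <= rsum m (fun y => Rabs (w y))) by (apply (rsum_term m (fun y => Rabs (w y))); auto; intros; apply Rabs_pos). lra. }
set (f := fun eta l => sexp m S (t (mu m phi (pp m q q' eta l))) w).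
assert (Part1 : forall eta, 0 < eta <= 1 -> f eta 1 = f eta 0).
{ intros eta Heta. apply (const01 (f eta)).
  intros l Hl dl Hdl.
  set (eps := eta / (INR m * W)).
  assert (Heps : eps > 0) by (unfold eps; apply Rdiv_lt_0_compat; [lra| apply Rmult_lt_0_compat; lra]).
  assert (HepsW : eps * W = eta / INR m) by (unfold eps; field; lra).
  destruct (pp_prob m q q' eta l Hm Hq Hq' Heta Hl) as [HP HPm].
  assert (HxM : marg m phi (mu m phi (pp m q q' eta l))) by (exists (pp m q q' eta l); split; auto).
  destruct (St_cont m d k phi S t HS Hsp Htc _ HxM (dl * eps) ltac:(apply Rmult_gt_0_compat; lra)) as [dlt [Hdlt Hcont]].
  set (C := vnorm d (vsub (mu m phi q') (mu m phi q))).
  assert (HC : 0 <= C) by apply vnorm_nonneg.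
  exists (dlt / (C + 1)). split. { apply Rdiv_lt_0_compat; lra. }
  intros l' Hl' Hll'.
  destruct (pp_prob m q q' eta l' Hm Hq Hq' Heta Hl') as [HP' HPm'].
  assert (Hx'M : marg m phi (mu m phi (pp m q q' eta l'))) by (exists (pp m q q' eta l'); split; auto).
  assert (Hn : vnorm d (vsub (mu m phi (pp m q q' eta l')) (mu m phi (pp m q q' eta l))) < dlt).
  { rewrite vsub_mu_pp, vnorm_scal. fold C. rewrite Rabs_mult.
    assert (Rabs (1 - eta) <= 1) by (rewrite Rabs_right; lra).
    assert (0 <= Rabs (l' - l)) by apply Rabs_pos.
    apply Rle_lt_trans with (Rabs (l' - l) * C).
    { apply Rmult_le_compat_r; auto. nra. }
    assert (Rabs (l' - l) * (C + 1) < dlt).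
    { apply Rlt_le_trans with (dlt / (C + 1) * (C + 1)). apply Rmult_lt_compat_r; lra. right; field; lra. }
    nra. }
  assert (HSb := Hcont _ Hx'M Hn).
  assert (HK := key_ineq m phi k S t Hsp Hopt (pp m q q' eta l') (pp m q q' eta l) w eps Heps HP' HP
     ltac:(intros y Hy; specialize (HwW y Hy); specialize (HPm' y Hy); nra)
     ltac:(intros y Hy; specialize (HwW y Hy); specialize (HPm y Hy); nra) Hw Hwphi).
  rewrite sexp_cross in HK.
  assert (HB := cross_bound m (pp m q q' eta l') (pp m q q' eta l) q q'
     (fun y => S (t (mu m phi (pp m q q' eta l))) y - S (t (mu m phi (pp m q q' eta l'))) y)
     (Rabs (l' - l)) (dl * eps) ltac:(apply Rabs_pos) ltac:(nra) Hq Hq').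
  assert (HB2 : rsum m (fun y => (pp m q q' eta l' y - pp m q q' eta l y) *
     (S (t (mu m phi (pp m q q' eta l))) y - S (t (mu m phi (pp m q q' eta l'))) y)) <= Rabs (l' - l) * (dl * eps) * 2).
  { apply HB.
    - intros y Hy. unfold pp.
      replace ((1 - eta) * ((1 - l') * q y + l' * q' y) + eta * / INR m - ((1 - eta) * ((1 - l) * q y + l * q' y) + eta * / INR m))
        with (((1 - eta) * (l' - l)) * (q' y - q y)) by ring.
      rewrite !Rabs_mult. destruct Hq as [Hq1 _]. destruct Hq' as [Hq1' _].
      assert (h1 := Hq1 y Hy). assert (h2 := Hq1' y Hy).
      assert (Rabs (1 - eta) <= 1) by (rewrite Rabs_right; lra).
      assert (Rabs (q' y - q y) <= q y + q' y) by (apply Rabs_le; lra).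
      assert (0 <= Rabs (l' - l)) by apply Rabs_pos.
      assert (0 <= Rabs (q' y - q y)) by apply Rabs_pos.
      assert (0 <= Rabs (1 - eta)) by apply Rabs_pos.
      rewrite (Rmult_comm (Rabs (1 - eta))), Rmult_assoc. apply Rmult_le_compat_l; auto.
      assert (0 <= (1 - Rabs (1 - eta)) * Rabs (q' y - q y)) by (apply Rmult_le_pos; lra). nra.
    - intros y Hy. rewrite Rabs_minus_sym. left. apply HSb; auto. }
  unfold f.
  assert (Hfin : 2 * eps * Rabs (sexp m S (t (mu m phi (pp m q q' eta l'))) w - sexp m S (t (mu m phi (pp m q q' eta l))) w)
           <= 2 * eps * (dl * Rabs (l' - l))) by nra.
  apply Rmult_le_reg_l with (2 * eps). lra. exact Hfin. }
apply eq_of_close. intros e He.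
set (Wa := rsum m (fun y => Rabs (w y))).
set (e0 := e / (2 * (Wa + 1))).
assert (HWa : 0 <= Wa) by exact HW0.
assert (He0 : e0 > 0) by (unfold e0; apply Rdiv_lt_0_compat; lra).
assert (HqM : marg m phi (mu m phi q)) by (exists q; split; auto).
assert (Hq'M : marg m phi (mu m phi q')) by (exists q'; split; auto).
destruct (St_cont m d k phi S t HS Hsp Htc _ HqM e0 He0) as [d1 [Hd1 Hc1]].
destruct (St_cont m d k phi S t HS Hsp Htc _ Hq'M e0 He0) as [d2 [Hd2 Hc2]].
set (r := fun _ : nat => / INR m).
set (C1 := vnorm d (vsub (mu m phi r) (mu m phi q))).
set (C2 := vnorm d (vsub (mu m phi r) (mu m phi q'))).
assert (HC1 : 0 <= C1) by apply vnorm_nonneg.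
assert (HC2 : 0 <= C2) by apply vnorm_nonneg.
set (eta := Rmin 1 (Rmin (d1 / (C1 + 1)) (d2 / (C2 + 1)))).
assert (Heta1 : eta <= 1) by apply Rmin_l.
assert (Heta2 : eta <= d1 / (C1 + 1)) by (eapply Rle_trans; [apply Rmin_r| apply Rmin_l]).
assert (Heta3 : eta <= d2 / (C2 + 1)) by (eapply Rle_trans; [apply Rmin_r| apply Rmin_r]).
assert (Heta0 : 0 < eta).
{ unfold eta. apply Rmin_glb_lt; [lra|]. apply Rmin_glb_lt; apply Rdiv_lt_0_compat; lra. }
assert (E1 := Part1 eta (conj Heta0 Heta1)). unfold f in E1.
assert (Hsc : forall C dd, 0 <= C -> dd > 0 -> eta <= dd / (C + 1) -> eta * C < dd).
{ intros C dd HC Hdd Hle. assert (eta * (C + 1) <= dd).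
  { apply Rle_trans with (dd / (C + 1) * (C + 1)). apply Rmult_le_compat_r; lra. right; field; lra. }
  nra. }
destruct (pp_prob m q q' eta 0 Hm Hq Hq' (conj Heta0 Heta1) ltac:(lra)) as [HP0 _].
destruct (pp_prob m q q' eta 1 Hm Hq Hq' (conj Heta0 Heta1) ltac:(lra)) as [HP1 _].
assert (N0 : vnorm d (vsub (mu m phi (pp m q q' eta 0)) (mu m phi q)) < d1).
{ replace (vsub (mu m phi (pp m q q' eta 0)) (mu m phi q)) with (fun i => eta * vsub (mu m phi r) (mu m phi q) i).
  - rewrite vnorm_scal, Rabs_right by lra. apply Hsc; auto.
  - apply functional_extensionality; intro i. unfold vsub. rewrite mu_pp. fold r. ring. }
assert (N1 : vnorm d (vsub (mu m phi (pp m q q' eta 1)) (mu m phi q')) < d2).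
{ replace (vsub (mu m phi (pp m q q' eta 1)) (mu m phi q')) with (fun i => eta * vsub (mu m phi r) (mu m phi q') i).
  - rewrite vnorm_scal, Rabs_right by lra. apply Hsc; auto.
  - apply functional_extensionality; intro i. unfold vsub. rewrite mu_pp. fold r. ring. }
assert (B0 := sexp_diff_bound m S (t (mu m phi (pp m q q' eta 0))) (t (mu m phi q)) w e0
   ltac:(intros y Hy; left; apply Hc1; auto; exists (pp m q q' eta 0); split; auto)).
assert (B1 := sexp_diff_bound m S (t (mu m phi (pp m q q' eta 1))) (t (mu m phi q')) w e0
   ltac:(intros y Hy; left; apply Hc2; auto; exists (pp m q q' eta 1); split; auto)).
fold Wa in B0, B1.
assert (Wa * e0 < e / 2).
{ assert (Heq : (Wa + 1) * e0 = e / 2) by (unfold e0; field; intros Hc; lra). nra. }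
rewrite E1 in B1.
replace (sexp m S (t (mu m phi q)) w - sexp m S (t (mu m phi q')) w) with
  ((sexp m S (t (mu m phi (pp m q q' eta 0))) w - sexp m S (t (mu m phi q')) w) -
   (sexp m S (t (mu m phi (pp m q q' eta 0))) w - sexp m S (t (mu m phi q)) w)) by ring.
eapply Rle_lt_trans. apply Rabs_triang. rewrite Rabs_Ropp. lra.
Qed.

Definition psi (phi : nat -> vec) (y : nat) : vec := vsub (phi y) (phi 0%nat).
Definition Kf d phi y z := inner d (psi phi y) (psi phi z).
Definition bb (S : vec -> nat -> R) (t : vec -> vec) (phi : nat -> vec) (u : vec) (y : nat) : R :=
  (S (t u) y - S (t (phi 0%nat)) y) - (S (t u) 0%nat - S (t (phi 0%nat)) 0%nat).
Definition cc m S t phi (P : nat -> nat -> R) u z := rsum m (fun x => bb S t phi u x * P x z).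
Definition g0 m S t phi P u : vec := mu m (psi phi) (cc m S t phi P u).

Definition q0 : vec := fun y => if Nat.eqb y 0 then 1 else 0.

Lemma q0_prob m : (0 < m)%nat -> is_prob m q0.
Proof.
intros Hm. split.
- intros y _. unfold q0. destruct (Nat.eqb y 0); lra.
- rewrite (rsum_ext m q0 (fun y => (if Nat.eqb y 0 then 1 else 0) * 1)).
  rewrite rsum_delta0; auto; lra. intros; unfold q0; ring.
Qed.

Lemma mu_q0 m phi : (0 < m)%nat -> mu m phi q0 = phi 0%nat.
Proof.
intros Hm. apply functional_extensionality; intro i. unfold mu, q0.
rewrite (rsum_delta0 m 1 (fun y => phi y i)); auto. ring.
Qed.

Lemma marg_phi0 m phi : (0 < m)%nat -> marg m phi (phi 0%nat).
Proof. intros Hm. exists q0. split. apply q0_prob; auto. rewrite mu_q0; auto. Qed.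

Lemma consistency m d k (phi : nat -> vec) (S : vec -> nat -> R) (t : vec -> vec) :
  (0 < m)%nat ->
  (forall y, (y < m)%nat -> in_space d (phi y)) ->
  (forall y, (y < m)%nat -> continuous_on_R k (in_space k) (fun v => S v y)) ->
  (forall u, marg m phi u -> in_space k (t u)) ->
  continuous_on d k (marg m phi) t ->
  (forall q, is_prob m q -> forall v, in_space k v -> v <> t (mu m phi q) ->
     sexp m S (t (mu m phi q)) q < sexp m S v q) ->
  forall u, marg m phi u -> forall w : nat -> R,
  (forall z, (z < m)%nat -> rsum m (fun y => w y * Kf d phi y z) = 0) ->
  rsum m (fun y => w y * bb S t phi u y) = 0.
Proof.
intros Hm Hphi HS Hsp Htc Hopt u Hu w Hw.
set (v := mu m (psi phi) w).
assert (Hvv : inner d v v = 0).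
{ unfold v at 1. rewrite inner_mu.
  apply rsum_zero. intros y Hy. rewrite inner_sym. unfold v. rewrite inner_mu.
  replace (rsum m (fun y0 => w y0 * inner d (psi phi y0) (psi phi y))) with 0. ring.
  symmetry. rewrite <- (Hw y Hy). apply rsum_ext. intros. reflexivity. }
assert (Hv : forall i, v i = 0).
{ intros i. destruct (Nat.lt_ge_cases i d) as [Hi|Hi].
  - apply (sumsq_zero d v Hvv i Hi).
  - unfold v, mu. apply rsum_zero. intros y Hy. unfold psi, vsub.
    rewrite (Hphi y Hy i Hi), (Hphi 0%nat Hm i Hi). ring. }
set (w' := fun y => w y - (if Nat.eqb y 0 then rsum m w else 0)).
assert (Hw'1 : rsum m w' = 0).
{ unfold w'. rewrite rsum_minus.
  rewrite (rsum_ext m (fun y => if Nat.eqb y 0 then rsum m w else 0) (fun y => (if Nat.eqb y 0 then rsum m w else 0) * 1)).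
  rewrite rsum_delta0; auto; ring. intros; ring. }
assert (Hw'2 : forall i, rsum m (fun y => w' y * phi y i) = 0).
{ intros i. rewrite <- (Hv i). unfold v, mu, w', psi, vsub.
  transitivity (rsum m (fun y => w y * phi y i) - rsum m (fun y => (if Nat.eqb y 0 then rsum m w else 0) * phi y i)).
  - rewrite <- rsum_minus. apply rsum_ext; intros; ring.
  - rewrite rsum_delta0 by auto. rewrite <- rsum_scal_r, <- rsum_minus. apply rsum_ext; intros; ring. }
assert (HA := stepA m d k phi S t Hm HS Hsp Htc Hopt w' Hw'1 Hw'2 u (phi 0%nat) Hu (marg_phi0 m phi Hm)).
unfold sexp, w' in HA. unfold bb.
transitivity (rsum m (fun y => (w y - (if Nat.eqb y 0 then rsum m w else 0)) * (S (t u) y - S (t (phi 0%nat)) y))).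
- set (D := fun y => S (t u) y - S (t (phi 0%nat)) y).
  transitivity (rsum m (fun y => w y * D y) - rsum m w * D 0%nat).
  + rewrite <- rsum_scal_r, <- rsum_minus. apply rsum_ext; intros; unfold D; ring.
  + rewrite <- (rsum_delta0 m (rsum m w) D Hm), <- rsum_minus. apply rsum_ext; intros; unfold D; ring.
- rewrite (rsum_ext m _ (fun y => (w y - (if Nat.eqb y 0 then rsum m w else 0)) * S (t u) y - (w y - (if Nat.eqb y 0 then rsum m w else 0)) * S (t (phi 0%nat)) y)) by (intros; ring).
  rewrite rsum_minus, HA. ring.
Qed.

Lemma prob_comb m q q' l : is_prob m q -> is_prob m q' -> 0 <= l <= 1 -> is_prob m (fun y => l * q y + (1 - l) * q' y).
Proof.
intros [H1 H2] [H1' H2'] Hl. split.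
- intros y Hy. specialize (H1 y Hy); specialize (H1' y Hy). nra.
- rewrite rsum_plus, !rsum_scal, H2, H2'. ring.
Qed.

Theorem theorem3p1 (m d k : nat) (phi : nat -> vec) (S : vec -> nat -> R) (t : vec -> vec) :
  (0 < m)%nat ->
  (forall y, (y < m)%nat -> in_space d (phi y)) ->
  (forall y, (y < m)%nat -> continuous_on_R k (in_space k) (fun v => S v y)) ->
  (forall u, marg m phi u -> in_space k (t u)) ->
  continuous_on d k (marg m phi) t ->
  (forall u u', marg m phi u -> marg m phi u' -> t u = t u' -> u = u') ->
  (forall q, is_prob m q -> forall v, in_space k v -> v <> t (mu m phi q) ->
     sexp m S (t (mu m phi q)) q < sexp m S v q) ->
  exists (h : vec -> R) (grad : vec -> vec),
    strictly_convex_on d (marg m phi) h /\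
    (forall u, marg m phi u -> aff_dir m phi (grad u)) /\
    differentiable_on d (marg m phi) h grad /\
    (forall u q, marg m phi u -> is_prob m q ->
       delta_s_eq m k S (t u) q (bregman d h grad (mu m phi q) u)).
Proof.
intros Hm Hphi HS Hsp Htc Hinj Hopt.
destruct (solve_nat' m (Kf d phi) (fun y z => inner_sym d _ _)) as [P HP].
set (G0 := g0 m S t phi P).
set (g := fun u i => - G0 u i).
set (h := fun u => - S (t u) 0%nat + inner d (vsub (phi 0%nat) u) (G0 u)).
set (a := fun y => S (t (phi 0%nat)) y - S (t (phi 0%nat)) 0%nat).
assert (Hg0 : forall u, marg m phi u -> forall z, (z < m)%nat -> inner d (psi phi z) (G0 u) = bb S t phi u z).
{ intros u Hu z Hz. rewrite <- (HP (bb S t phi u) (consistency m d k phi S t Hm Hphi HS Hsp Htc Hopt u Hu) z Hz).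
  unfold G0, g0. rewrite inner_sym, inner_mu. apply rsum_ext; intros. reflexivity. }
assert (Hrep : forall u, marg m phi u -> forall y, (y < m)%nat -> S (t u) y = a y - h u - inner d (vsub (phi y) u) (g u)).
{ intros u Hu y Hy. unfold g. rewrite inner_opp_r. unfold h, a.
  assert (e1 := Hg0 u Hu y Hy). unfold psi in e1. rewrite inner_sub_l in e1.
  rewrite !inner_sub_l. unfold bb in e1. lra. }
assert (Hsexp : forall u q, marg m phi u -> is_prob m q -> sexp m S (t u) q =
   rsum m (fun y => q y * a y) - h u - inner d (mu m phi q) (g u) + inner d u (g u)).
{ intros u q Hu [Hq1 Hq2]. unfold sexp.
  rewrite (rsum_ext m _ (fun y => q y * a y - h u * q y - (q y * inner d (phi y) (g u)) + inner d u (g u) * q y)).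
  - rewrite rsum_plus, rsum_minus, rsum_minus, rsum_scal, rsum_scal, Hq2, <- inner_mu. ring.
  - intros y Hy. rewrite (Hrep u Hu y Hy), inner_sub_l. ring. }
assert (Hbreg : forall u q, marg m phi u -> is_prob m q ->
   sexp m S (t u) q - bregman d h g (mu m phi q) u = sexp m S (t (mu m phi q)) q).
{ intros u q Hu Hq. assert (HM : marg m phi (mu m phi q)) by (exists q; split; auto).
  rewrite (Hsexp u q), (Hsexp (mu m phi q) q) by auto. unfold bregman. rewrite inner_sub_l. ring. }
assert (Hpos : forall u u', marg m phi u -> marg m phi u' -> u' <> u -> bregman d h g u' u > 0).
{ intros u u' Hu Hu' ne. destruct Hu' as [q' [Hq' E]]. subst u'.
  assert (e := Hbreg u q' Hu Hq').
  assert (sexp m S (t (mu m phi q')) q' < sexp m S (t u) q').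
  { apply Hopt; auto. intro E. apply ne. symmetry. apply Hinj; auto. exists q'; split; auto. }
  lra. }
assert (Hnn : forall u u', marg m phi u -> marg m phi u' -> bregman d h g u' u >= 0).
{ intros u u' Hu Hu'. destruct (classic (u' = u)) as [->|ne].
  - unfold bregman. rewrite inner_sub_l. right; ring.
  - left; apply Hpos; auto. }
exists h, g. split; [|split; [|split]].
-
  intros x y Hx Hy nxy l Hl.
  assert (Hx' := Hx). assert (Hy' := Hy).
  destruct Hx' as [qx [Hqx Ex]]. destruct Hy' as [qy [Hqy Ey]].
  set (z := vcomb l x (1 - l) y).
  assert (Hz : marg m phi z).
  { exists (fun i => l * qx i + (1 - l) * qy i). split. apply prob_comb; auto; lra.
    rewrite mu_lin, <- Ex, <- Ey. reflexivity. }
  assert (nxz : x <> z).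
  { intro E. apply nxy. apply functional_extensionality; intro i.
    assert (Ei := f_equal (fun f => f i) E). unfold z, vcomb in Ei. simpl in Ei.
    assert ((1 - l) * (y i - x i) = 0) by lra.
    apply Rmult_integral in H. destruct H; lra. }
  assert (nyz : y <> z).
  { intro E. apply nxy. apply functional_extensionality; intro i.
    assert (Ei := f_equal (fun f => f i) E). unfold z, vcomb in Ei. simpl in Ei.
    assert (l * (x i - y i) = 0) by lra.
    apply Rmult_integral in H. destruct H; lra. }
  assert (D1 := Hpos z x Hz Hx nxz). assert (D2 := Hpos z y Hz Hy nyz).
  unfold bregman in D1, D2. rewrite inner_sub_l in D1, D2.
  assert (Iz : inner d z (g z) = l * inner d x (g z) + (1 - l) * inner d y (g z)).
  { unfold z, vcomb. apply inner_lin_l. }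
  fold z. nra.
-
  intros u Hu. exists (fun y => - cc m S t phi P u y).
  apply functional_extensionality; intro i. unfold g, G0, g0, mu, psi, vsub.
  replace (- rsum m (fun y => cc m S t phi P u y * (phi y i - phi 0%nat i)))
    with ((-1) * rsum m (fun y => cc m S t phi P u y * (phi y i - phi 0%nat i))) by ring.
  rewrite <- rsum_scal. apply rsum_ext; intros; ring.
-
  intros u Hu e He.
  set (Ctot := rsum m (fun z => rsum m (fun x => Rabs (P x z)) * rsum d (fun i => Rabs (psi phi z i)))).
  assert (HC : 0 <= Ctot).
  { apply rsum_nonneg. intros. apply Rmult_le_pos; apply rsum_nonneg; intros; apply Rabs_pos. }
  set (e' := e / (2 * (Ctot + 1))).
  assert (He' : e' > 0) by (unfold e'; apply Rdiv_lt_0_compat; lra).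
  assert (He'C : 2 * e' * Ctot <= e).
  { assert (Heq : 2 * e' * (Ctot + 1) = e) by (unfold e'; field; intros Hc; lra). nra. }
  destruct (St_cont m d k phi S t HS Hsp Htc u Hu e' He') as [dl [Hdl Hc]].
  exists dl. split; auto. intros u' Hu' Hn.
  assert (Hb : forall x, (x < m)%nat -> Rabs (bb S t phi u x - bb S t phi u' x) <= 2 * e').
  { intros x Hx. unfold bb.
    replace (S (t u) x - S (t (phi 0%nat)) x - (S (t u) 0%nat - S (t (phi 0%nat)) 0%nat) -
      (S (t u') x - S (t (phi 0%nat)) x - (S (t u') 0%nat - S (t (phi 0%nat)) 0%nat)))
      with ((S (t u') 0%nat - S (t u) 0%nat) - (S (t u') x - S (t u) x)) by ring.
    eapply Rle_trans. apply Rabs_triang. rewrite Rabs_Ropp.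
    assert (h1 := Hc u' Hu' Hn x Hx). assert (h2 := Hc u' Hu' Hn 0%nat Hm). lra. }
  assert (Hsum : bregman d h g u' u + bregman d h g u u' = inner d (vsub u' u) (vsub (g u') (g u))).
  { unfold bregman. rewrite !inner_sub_r, !inner_sub_l. ring. }
  assert (Hdiff : vsub (g u') (g u) = mu m (psi phi) (fun z => cc m S t phi P u z - cc m S t phi P u' z)).
  { apply functional_extensionality; intro i. unfold vsub, g, G0, g0, mu.
    rewrite (rsum_ext m (fun y => (cc m S t phi P u y - cc m S t phi P u' y) * psi phi y i)
      (fun y => cc m S t phi P u y * psi phi y i - cc m S t phi P u' y * psi phi y i)) by (intros; ring).
    rewrite rsum_minus. ring. }
  set (N := vnorm d (vsub u' u)).
  assert (HN : 0 <= N) by apply vnorm_nonneg.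
  assert (Hbd : inner d (vsub u' u) (vsub (g u') (g u)) <= e * N).
  { rewrite Hdiff, inner_sym, inner_mu.
    eapply Rle_trans. apply Rle_abs. eapply Rle_trans. apply rsum_abs.
    apply Rle_trans with (rsum m (fun z => (2 * e' * N) * (rsum m (fun x => Rabs (P x z)) * rsum d (fun i => Rabs (psi phi z i))))).
    - apply rsum_le. intros z Hz. rewrite Rabs_mult.
      assert (A1 : Rabs (cc m S t phi P u z - cc m S t phi P u' z) <= 2 * e' * rsum m (fun x => Rabs (P x z))).
      { unfold cc. rewrite <- rsum_minus. eapply Rle_trans. apply rsum_abs.
        rewrite <- rsum_scal. apply rsum_le. intros x Hx.
        replace (bb S t phi u x * P x z - bb S t phi u' x * P x z) with ((bb S t phi u x - bb S t phi u' x) * P x z) by ring.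
        rewrite Rabs_mult. apply Rmult_le_compat_r. apply Rabs_pos. auto. }
      assert (A2 : Rabs (inner d (psi phi z) (vsub u' u)) <= N * rsum d (fun i => Rabs (psi phi z i))).
      { rewrite inner_sym. apply inner_bound. }
      replace (2 * e' * N * (rsum m (fun x => Rabs (P x z)) * rsum d (fun i => Rabs (psi phi z i))))
        with ((2 * e' * rsum m (fun x => Rabs (P x z))) * (N * rsum d (fun i => Rabs (psi phi z i)))) by ring.
      apply Rmult_le_compat; auto; apply Rabs_pos.
    - rewrite rsum_scal. fold Ctot. nra. }
  assert (B1 := Hnn u u' Hu Hu'). assert (B2 := Hnn u' u Hu' Hu).
  fold N. change (h u' - h u - inner d (vsub u' u) (g u)) with (bregman d h g u' u). rewrite Rabs_right by lra. lra.
-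
  intros u q Hu Hq. unfold delta_s_eq. rewrite Hbreg by auto. split.
  + intros r [v' [Hv' ->]]. apply (opt_le m phi k S t Hopt); auto.
  + intros b Hb. apply Hb. exists (t (mu m phi q)). split; auto. apply Hsp. exists q; split; auto.
Qed.
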